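(* Let $Q(x,u,v,y;\alpha,\beta)$ be affine-linear in each of $x,u,v,y$ and satisfy $Q(x,u,v,y;\alpha,\beta)=\varepsilon Q(x,v,u,y;\beta,\alpha)=\sigma Q(u,x,y,v;\alpha,\beta)$ with $\varepsilon,\sigma\in\{\pm1\}$. Define $g(x,u;\alpha,\beta)=QQ_{yv}-Q_yQ_v$ (evaluated at $Q=Q(x,u,v,y;\alpha,\beta)$; it is a biquadratic polynomial in $x,u$ independent of $v,y$). Then also $g(x,v;\beta,\alpha)=QQ_{yu}-Q_yQ_u$, and $g(x,u;\alpha,\beta)=g(u,x;\alpha,\beta)$. Moreover, let $f_1,f_2,f_3$ be defined by: $x_{23}=f_1(x,x_2,x_3)$ is the solution of $Q(x,x_2,x_3,x_{23};\alpha_2,\alpha_3)=0$, $x_{31}=f_2(x,x_3,x_1)$ the solution of $Q(x,x_3,x_1,x_{31};\alpha_3,\alpha_1)=0$, $x_{12}=f_3(x,x_1,x_2)$ the solution of $Q(x,x_1,x_2,x_{12};\alpha_1,\alpha_2)=0$. Then the identity $f_{3,x_2}f_{2,x_1}f_{1,x_3}=-f_{3,x_1}f_{2,x_3}f_{1,x_2}$ (notation as in the context) is equivalent to the identity $$g(x,x_1;\alpha_1,\alpha_2)g(x,x_2;\alpha_2,\alpha_3)g(x,x_3;\alpha_3,\alpha_1)=-g(x,x_1;\alpha_1,\alpha_3)g(x,x_2;\alpha_2,\alpha_1)g(x,x_3;\alpha_3,\alpha_2).$$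
   Context: $Q_y$, $Q_{yv}$ etc. denote partial derivatives of $Q$ with respect to the indicated variables. $f_{3,x_j}$ denotes the partial derivative of $f_3$ with respect to the argument occupied by $x_j$ in $f_3(x,x_1,x_2)$; similarly $f_{2,x_j}$ refers to $f_2(x,x_3,x_1)$ and $f_{1,x_j}$ to $f_1(x,x_2,x_3)$. *)

(* Defs.v *)
From HB Require Import structures.
From mathcomp Require Import all_boot all_order all_algebra.
From mathcomp Require Import all_classical all_reals all_analysis.
Set Implicit Arguments. Unset Strict Implicit. Unset Printing Implicit Defensive.
Import Order.TTheory GRing.Theory Num.Theory.
Local Open Scope ring_scope.

Section Defs.
Variable R : realType.

(* Q(x,u,v,y;alpha,beta), arguments in this order *)
Definition Qfun := R -> R -> R -> R -> R -> R -> R.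

Definition affine (f : R -> R) : Prop := exists a b : R, forall t, f t = a + b * t.

Definition multiaffine (Q : Qfun) : Prop :=
  forall x u v y al be,
    [/\ affine (fun t => Q t u v y al be), affine (fun t => Q x t v y al be),
        affine (fun t => Q x u t y al be) & affine (fun t => Q x u v t al be)].

Definition Q_y (Q : Qfun) x u v y al be := derive1 (fun t => Q x u v t al be) y.
Definition Q_u (Q : Qfun) x u v y al be := derive1 (fun t => Q x t v y al be) u.
Definition Q_v (Q : Qfun) x u v y al be := derive1 (fun t => Q x u t y al be) v.
Definition Q_yv (Q : Qfun) x u v y al be := derive1 (fun t => Q_y Q x u t y al be) v.
Definition Q_yu (Q : Qfun) x u v y al be := derive1 (fun t => Q_y Q x t v y al be) u.

Definition gexpr (Q : Qfun) x u v y al be :=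
  Q x u v y al be * Q_yv Q x u v y al be - Q_y Q x u v y al be * Q_v Q x u v y al be.
Definition gexpr_u (Q : Qfun) x u v y al be :=
  Q x u v y al be * Q_yu Q x u v y al be - Q_y Q x u v y al be * Q_u Q x u v y al be.

(* g(x,u;al,be): gexpr is independent of v,y (part of the theorem); we
   evaluate it at v = y = 0 *)
Definition g (Q : Qfun) x u al be := gexpr Q x u 0 0 al be.

End Defs.

(* Main.v *)
Require Import Defs.
From HB Require Import structures.
From mathcomp Require Import all_boot all_order all_algebra.
From mathcomp Require Import all_classical all_reals all_analysis.
From mathcomp Require Import ring lra.
Import Order.TTheory GRing.Theory Num.Theory numFieldNormedType.Exports.
Local Open Scope ring_scope.

Section Helpers.
Variable R : realType.

Lemma affine_eq (f : R -> R) : affine f -> forall t, f t = f 0 + t * (f 1 - f 0).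
Proof. by case=> a [b H] t; rewrite !H; ring. Qed.

Definition gform (h : R -> R -> R) :=
  h 0 0 * (h 1 1 - h 1 0 - h 0 1 + h 0 0) - (h 0 1 - h 0 0) * (h 1 0 - h 0 0).

Lemma bilin (h : R -> R -> R) :
  (forall y, affine (fun t => h t y)) -> (forall t, affine (h t)) ->
  forall t y, h t y = h 0 0 + t * (h 1 0 - h 0 0) + y * (h 0 1 - h 0 0)
     + t * y * (h 1 1 - h 1 0 - h 0 1 + h 0 0).
Proof.
move=> H1 H2 t y.
have E1 := affine_eq _ (H2 t) y; have E2 := affine_eq _ (H1 0) t;
have E3 := affine_eq _ (H1 1) t; simpl in E1, E2, E3.
rewrite E1 E2 E3; ring.
Qed.

Lemma rat_id (a0 a1 b0 b1 t0 : R) : b0 + b1 * t0 != 0 ->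
  - (a0 + a1 * t0) * (- (b0 + b1 * t0) ^- 2 * b1) + (b0 + b1 * t0)^-1 * - a1
  = (a0 * b1 - b0 * a1) / (b0 + b1 * t0) ^+ 2.
Proof. by move=> H; field. Qed.

Lemma scaleRE (a b : R) : a *: b = a * b. Proof. by []. Qed.

Lemma key (h : R -> R -> R) (F : R -> R) t0 :
  (forall y, affine (fun t => h t y)) -> (forall t, affine (h t)) ->
  (forall t, h t 1 - h t 0 != 0 -> F t = - h t 0 / (h t 1 - h t 0)) ->
  h t0 1 - h t0 0 != 0 ->
  derive1 F t0 = gform h / (h t0 1 - h t0 0) ^+ 2.
Proof.
move=> H1 H2 HF Hn.
have B := bilin _ H1 H2.
pose pA := (h 0 0)%:P + (h 1 0 - h 0 0)%:P * 'X;
pose pB := (h 0 1 - h 0 0)%:P + (h 1 1 - h 1 0 - h 0 1 + h 0 0)%:P * 'X.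
have hA t : h t 0 = pA.[t].
  by rewrite /pA !hornerE (B t 0); ring.
have hB t : h t 1 - h t 0 = pB.[t].
  rewrite /pB !hornerE (B t 1) (B t 0); ring.
have Hn' : pB.[t0] != 0 by rewrite -hB.
have nearB : \forall t \near t0, pB.[t] != 0.
  have := @cvgr_neq0 _ _ _ (nbhs t0) _ (horner pB) pB.[t0] (@continuous_horner R pB t0) Hn'.
  by apply; apply: nbhs_filter.
have nearF : \forall t \near t0, (fun t => - pA.[t] * (pB.[t])^-1) t = F t.
  apply: filterS nearB => t Ht /=.
  by rewrite HF ?hB // hA.
rewrite derive1E -(near_eq_derive _ nearF).
have D : is_derive t0 (1:R) (fun t => - pA.[t] * (pB.[t])^-1)
   (- pA.[t0] *: (- (pB.[t0]) ^- 2 *: pB^`().[t0]) + (pB.[t0])^-1 *: (- pA^`().[t0])).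
  apply: (@is_deriveM _ _ (fun t => - pA.[t]) (fun t => (pB.[t])^-1)).
rewrite (@derive_val _ _ _ _ _ _ _ D) hB /gform.
rewrite /pA /pB !derivD !derivC !derivM !derivC !derivX !(mul0r, add0r, mulr1) !(hornerD, hornerCM, hornerC, hornerX) /= !scaleRE.
move: Hn'; rewrite /pB !(hornerD, hornerCM, hornerC, hornerX) => Hn2.
exact: (rat_id (h 0 0) (h 1 0 - h 0 0) (h 0 1 - h 0 0) (h 1 1 - h 1 0 - h 0 1 + h 0 0) t0 Hn2).
Qed.


Lemma affineB (f g : R -> R) : affine f -> affine g -> affine (fun t => f t - g t).
Proof. move=> [a [b Hf]] [c [d Hg]]; exists (a - c), (b - d) => t; rewrite Hf Hg; ring. Qed.

Lemma affine_der (f : R -> R) : affine f -> forall t, derive1 f t = f 1 - f 0.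
Proof.
move=> [a [b H]] t.
have -> : f = horner (a%:P + b%:P * 'X).
  by apply/funext => s; rewrite H !hornerE.
rewrite derive1E derive_val derivD derivC derivM derivC derivX !hornerE; ring.
Qed.


Lemma alg_id (g12 g23 g31 g13 g21 g32 B1 B2 B3 : R) : B1 != 0 -> B2 != 0 -> B3 != 0 ->
  (g12 / B3 ^+ 2 * (g31 / B2 ^+ 2) * (g23 / B1 ^+ 2) =
     - (g21 / B3 ^+ 2 * (g13 / B2 ^+ 2) * (g32 / B1 ^+ 2))) <->
  (g12 * g23 * g31 = - (g13 * g21 * g32)).
Proof.
move=> n1 n2 n3; split=> E.
- have K1 : g12 * g23 * g31 = (g12 / B3 ^+ 2 * (g31 / B2 ^+ 2) * (g23 / B1 ^+ 2)) * (B1 * B2 * B3) ^+ 2.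
    by field; rewrite n1 n2 n3.
  have K2 : g13 * g21 * g32 = (g21 / B3 ^+ 2 * (g13 / B2 ^+ 2) * (g32 / B1 ^+ 2)) * (B1 * B2 * B3) ^+ 2.
    by field; rewrite n1 n2 n3.
  by rewrite K1 K2 E mulNr.
- have K1 : g12 / B3 ^+ 2 * (g31 / B2 ^+ 2) * (g23 / B1 ^+ 2) = (g12 * g23 * g31) / (B1 * B2 * B3) ^+ 2.
    by field; rewrite n1 n2 n3.
  have K2 : g21 / B3 ^+ 2 * (g13 / B2 ^+ 2) * (g32 / B1 ^+ 2) = (g13 * g21 * g32) / (B1 * B2 * B3) ^+ 2.
    by field; rewrite n1 n2 n3.
  by rewrite K1 K2 E mulNr.
Qed.

Lemma nz_poly_nonroot (p : {poly R}) : p != 0 -> exists s, p.[s] != 0.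
Proof.
move=> p0; apply/not_existsP => H.
have rs := max_poly_roots p0 (rs := [seq i%:R | i <- iota 0 (size p)]).
have : (size [seq i%:R : R | i <- iota 0 (size p)] < size p)%N.
  apply: rs.
    apply/allP => z /mapP [i _ ->]; apply/rootP.
    by have := H i%:R => /negP; rewrite negbK => /eqP.
  rewrite map_inj_uniq ?iota_uniq //; exact: (mulrIn (@oner_neq0 R)).
by rewrite size_map size_iota ltnn.
Qed.


Definition ispoly (f : R -> R) := exists p : {poly R}, forall s, f s = p.[s].

Lemma ispoly_ext f g : (forall s, f s = g s) -> ispoly g -> ispoly f.
Proof. by move=> E [p Hp]; exists p => s; rewrite E Hp. Qed.
Lemma ispoly_cst c : ispoly (fun _ => c).
Proof. by exists c%:P => s; rewrite hornerC. Qed.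
Lemma ispoly_lin a w : ispoly (fun s => a + s * w).
Proof. by exists (a%:P + w%:P * 'X) => s; rewrite !hornerE mulrC. Qed.
Lemma ispolyD f g : ispoly f -> ispoly g -> ispoly (fun s => f s + g s).
Proof. by move=> [p Hp] [q Hq]; exists (p + q) => s; rewrite hornerD Hp Hq. Qed.
Lemma ispolyB f g : ispoly f -> ispoly g -> ispoly (fun s => f s - g s).
Proof. by move=> [p Hp] [q Hq]; exists (p - q) => s; rewrite hornerD hornerN Hp Hq. Qed.
Lemma ispolyM f g : ispoly f -> ispoly g -> ispoly (fun s => f s * g s).
Proof. by move=> [p Hp] [q Hq]; exists (p * q) => s; rewrite hornerM Hp Hq. Qed.

Lemma prod_nz f g a b : ispoly f -> ispoly g -> f a != 0 -> g b != 0 ->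
  exists s, f s * g s != 0.
Proof.
move=> [p Hp] [q Hq] fa gb.
have p0 : p != 0 by apply: contraNneq fa => E; rewrite Hp E horner0.
have q0 : q != 0 by apply: contraNneq gb => E; rewrite Hq E horner0.
have [s Hs] := nz_poly_nonroot _ (mulf_neq0 p0 q0).
by exists s; rewrite Hp Hq -hornerM.
Qed.

Lemma vanish f b a : ispoly f -> ispoly b -> b a != 0 ->
  (forall s, b s != 0 -> f s = 0) -> forall s, f s = 0.
Proof.
move=> [p Hp] [q Hq] ba H s.
have [E|p0] := eqVneq p 0; first by rewrite Hp E horner0.
have q0 : q != 0 by apply: contraNneq ba => E; rewrite Hq E horner0.
have [t Ht] := nz_poly_nonroot _ (mulf_neq0 p0 q0).
move: Ht; rewrite hornerM mulf_eq0 negb_or => /andP [pt qt].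
by move: pt; rewrite -Hp H ?eqxx // Hq.
Qed.

Definition F4 := R -> R -> R -> R -> R.
Definition PL (F : F4) := forall p0 p1 p2 p3 w0 w1 w2 w3 : R,
  ispoly (fun s => F (p0 + s * w0) (p1 + s * w1) (p2 + s * w2) (p3 + s * w3)).

Lemma PL_ext (F G : F4) : (forall a b c d, F a b c d = G a b c d) -> PL G -> PL F.
Proof. by move=> E H p0 p1 p2 p3 w0 w1 w2 w3; apply: (ispoly_ext _ _ _ (H p0 p1 p2 p3 w0 w1 w2 w3)) => s; rewrite E. Qed.
Lemma PL_cst c : PL (fun _ _ _ _ => c).
Proof. by move=> *; apply: ispoly_cst. Qed.
Lemma PL_p0 : PL (fun a _ _ _ => a). Proof. by move=> *; apply: ispoly_lin. Qed.
Lemma PL_p1 : PL (fun _ a _ _ => a). Proof. by move=> *; apply: ispoly_lin. Qed.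
Lemma PL_p2 : PL (fun _ _ a _ => a). Proof. by move=> *; apply: ispoly_lin. Qed.
Lemma PL_p3 : PL (fun _ _ _ a => a). Proof. by move=> *; apply: ispoly_lin. Qed.
Lemma PLD F G : PL F -> PL G -> PL (fun a b c d => F a b c d + G a b c d).
Proof. by move=> HF HG p0 p1 p2 p3 w0 w1 w2 w3; exact: (ispolyD _ _ (HF p0 p1 p2 p3 w0 w1 w2 w3) (HG p0 p1 p2 p3 w0 w1 w2 w3)). Qed.
Lemma PLB F G : PL F -> PL G -> PL (fun a b c d => F a b c d - G a b c d).
Proof. by move=> HF HG p0 p1 p2 p3 w0 w1 w2 w3; exact: (ispolyB _ _ (HF p0 p1 p2 p3 w0 w1 w2 w3) (HG p0 p1 p2 p3 w0 w1 w2 w3)). Qed.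
Lemma PLM F G : PL F -> PL G -> PL (fun a b c d => F a b c d * G a b c d).
Proof. by move=> HF HG p0 p1 p2 p3 w0 w1 w2 w3; exact: (ispolyM _ _ (HF p0 p1 p2 p3 w0 w1 w2 w3) (HG p0 p1 p2 p3 w0 w1 w2 w3)). Qed.

Lemma PL_nz F G (a0 a1 a2 a3 b0 b1 b2 b3 : R) : PL F -> PL G ->
  F a0 a1 a2 a3 != 0 -> G b0 b1 b2 b3 != 0 ->
  exists c0 c1 c2 c3, F c0 c1 c2 c3 * G c0 c1 c2 c3 != 0.
Proof.
move=> HF HG Fa Gb.
have E0 : F (a0 + 0 * (b0 - a0)) (a1 + 0 * (b1 - a1)) (a2 + 0 * (b2 - a2)) (a3 + 0 * (b3 - a3)) != 0.
  by rewrite !mul0r !addr0.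
have E1 : G (a0 + 1 * (b0 - a0)) (a1 + 1 * (b1 - a1)) (a2 + 1 * (b2 - a2)) (a3 + 1 * (b3 - a3)) != 0.
  have L (x y : R) : x + 1 * (y - x) = y by ring.
  by rewrite !L.
have [s Hs] := prod_nz _ _ 0 1
  (HF a0 a1 a2 a3 (b0 - a0) (b1 - a1) (b2 - a2) (b3 - a3))
  (HG a0 a1 a2 a3 (b0 - a0) (b1 - a1) (b2 - a2) (b3 - a3)) E0 E1.
by eexists _, _, _, _; exact: Hs.
Qed.

Lemma PL_vanish H B (c0 c1 c2 c3 : R) : PL H -> PL B -> B c0 c1 c2 c3 != 0 ->
  (forall a b c d, B a b c d != 0 -> H a b c d = 0) -> forall a b c d, H a b c d = 0.
Proof.
move=> HH HB Bc Hyp a b c d.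
have := vanish _ _ 1 (HH a b c d (c0 - a) (c1 - b) (c2 - c) (c3 - d))
  (HB a b c d (c0 - a) (c1 - b) (c2 - c) (c3 - d)) _ _ 0.
rewrite /= !mul0r !addr0; apply.
- have L (x y : R) : x + 1 * (y - x) = y by ring.
  by rewrite /= !L.
- by move=> s; apply: Hyp.
Qed.
Variable Q : Qfun R.
Hypothesis HQ : multiaffine Q.

Lemma Q_yE x u v y al be : Q_y Q x u v y al be = Q x u v 1 al be - Q x u v 0 al be.
Proof. by rewrite /Q_y affine_der //; case: (HQ x u v y al be). Qed.
Lemma Q_vE x u v y al be : Q_v Q x u v y al be = Q x u 1 y al be - Q x u 0 y al be.
Proof. by rewrite /Q_v affine_der //; case: (HQ x u v y al be). Qed.
Lemma Q_uE x u v y al be : Q_u Q x u v y al be = Q x 1 v y al be - Q x 0 v y al be.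
Proof. by rewrite /Q_u affine_der //; case: (HQ x u v y al be). Qed.
Lemma Q_yvE x u v y al be : Q_yv Q x u v y al be =
  (Q x u 1 1 al be - Q x u 1 0 al be) - (Q x u 0 1 al be - Q x u 0 0 al be).
Proof.
rewrite /Q_yv (_ : (fun t => Q_y Q x u t y al be) = (fun t => Q x u t 1 al be - Q x u t 0 al be)).
  rewrite affine_der //; apply: affineB.
    by case: (HQ x u v 1 al be).
  by case: (HQ x u v 0 al be).
by apply/funext => t; rewrite Q_yE.
Qed.
Lemma Q_yuE x u v y al be : Q_yu Q x u v y al be =
  (Q x 1 v 1 al be - Q x 1 v 0 al be) - (Q x 0 v 1 al be - Q x 0 v 0 al be).
Proof.
rewrite /Q_yu (_ : (fun t => Q_y Q x t v y al be) = (fun t => Q x t v 1 al be - Q x t v 0 al be)).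
  rewrite affine_der //; apply: affineB.
    by case: (HQ x u v 1 al be).
  by case: (HQ x u v 0 al be).
by apply/funext => t; rewrite Q_yE.
Qed.

Lemma gexprE x u v y al be : gexpr Q x u v y al be = gform (fun t s => Q x u t s al be).
Proof.
have B := bilin (fun t s => Q x u t s al be)
  (fun s => let: And4 _ _ H _ := HQ x u 0 s al be in H)
  (fun t => let: And4 _ _ _ H := HQ x u t 0 al be in H).
simpl in B.
rewrite /gexpr Q_yE Q_vE Q_yvE /gform (B v y) (B v 1) (B v 0) (B 1 y) (B 0 y); ring.
Qed.

Lemma gexpr_uE x u v y al be : gexpr_u Q x u v y al be = gform (fun t s => Q x t v s al be).
Proof.
have B := bilin (fun t s => Q x t v s al be)
  (fun s => let: And4 _ H _ _ := HQ x 0 v s al be in H)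
  (fun t => let: And4 _ _ _ H := HQ x t v 0 al be in H).
simpl in B.
rewrite /gexpr_u Q_yE Q_uE Q_yuE /gform (B u y) (B u 1) (B u 0) (B 1 y) (B 0 y); ring.
Qed.

Lemma gE x u al be : g Q x u al be = gform (fun t s => Q x u t s al be).
Proof. exact: gexprE. Qed.


Lemma Qpoly al be l1 l2 l3 l4 : ispoly l1 -> ispoly l2 -> ispoly l3 -> ispoly l4 ->
  ispoly (fun s => Q (l1 s) (l2 s) (l3 s) (l4 s) al be).
Proof.
move=> P1 P2 P3 P4.
have S4 a b c : ispoly (fun s => Q a b c (l4 s) al be).
  apply: (ispoly_ext _ _ _ (ispolyD _ _ (ispoly_cst (Q a b c 0 al be))
     (ispolyM _ _ P4 (ispoly_cst (Q a b c 1 al be - Q a b c 0 al be))))) => s.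
  by have [_ _ _ H] := HQ a b c 0 al be; rewrite (affine_eq _ H).
have S3 a b : ispoly (fun s => Q a b (l3 s) (l4 s) al be).
  apply: (ispoly_ext _ _ _ (ispolyD _ _ (S4 a b 0)
     (ispolyM _ _ P3 (ispolyB _ _ (S4 a b 1) (S4 a b 0))))) => s.
  by have [_ _ H _] := HQ a b 0 (l4 s) al be; rewrite (affine_eq _ H).
have S2 a : ispoly (fun s => Q a (l2 s) (l3 s) (l4 s) al be).
  apply: (ispoly_ext _ _ _ (ispolyD _ _ (S3 a 0)
     (ispolyM _ _ P2 (ispolyB _ _ (S3 a 1) (S3 a 0))))) => s.
  by have [_ H _ _] := HQ a 0 (l3 s) (l4 s) al be; rewrite (affine_eq _ H).
apply: (ispoly_ext _ _ _ (ispolyD _ _ (S2 0)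
   (ispolyM _ _ P1 (ispolyB _ _ (S2 1) (S2 0))))) => s.
by have [H _ _ _] := HQ 0 (l2 s) (l3 s) (l4 s) al be; rewrite (affine_eq _ H).
Qed.

Lemma PL_Q F1 F2 F3 F4 al be : PL F1 -> PL F2 -> PL F3 -> PL F4 ->
  PL (fun a b c d => Q (F1 a b c d) (F2 a b c d) (F3 a b c d) (F4 a b c d) al be).
Proof.
move=> H1 H2 H3 H4 p0 p1 p2 p3 w0 w1 w2 w3.
exact: (Qpoly al be _ _ _ _ (H1 p0 p1 p2 p3 w0 w1 w2 w3) (H2 p0 p1 p2 p3 w0 w1 w2 w3)
  (H3 p0 p1 p2 p3 w0 w1 w2 w3) (H4 p0 p1 p2 p3 w0 w1 w2 w3)).
Qed.

Lemma PL_g F1 F2 al be : PL F1 -> PL F2 ->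
  PL (fun a b c d => g Q (F1 a b c d) (F2 a b c d) al be).
Proof.
move=> H1 H2.
apply: (PL_ext _ (fun a b c d => gform (fun t s => Q (F1 a b c d) (F2 a b c d) t s al be)))
  => [a b c d|]; first exact: gE.
rewrite /gform.
repeat first [apply: PLB | apply: PLM | apply: PLD | apply: PL_Q | apply: PL_cst | assumption].
Qed.

Lemma solve_der al be (f : R -> R -> R -> R) :
  (forall x u v, Q_y Q x u v 0 al be != 0 -> forall z, Q x u v z al be = 0 <-> z = f x u v) ->
  forall x u v, Q_y Q x u v 0 al be != 0 ->
  derive1 (fun t => f x u t) v = gform (fun t s => Q x u t s al be) / (Q_y Q x u v 0 al be) ^+ 2 /\
  derive1 (fun t => f x t v) u = gform (fun t s => Q x t v s al be) / (Q_y Q x u v 0 al be) ^+ 2.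
Proof.
move=> Hf x u v Hn; rewrite Q_yE in Hn *; split.
- apply: (key (fun t s => Q x u t s al be)) => //.
  + by move=> y; have [_ _ H _] := HQ x u 0 y al be.
  + by move=> t; have [_ _ _ H] := HQ x u t 0 al be.
  + move=> t Ht; apply/esym/(Hf x u t _ _).1; first by rewrite Q_yE.
    have [_ _ _ H] := HQ x u t 0 al be; rewrite (affine_eq _ H) /=.
    by field.
- apply: (key (fun t s => Q x t v s al be)) => //.
  + by move=> y; have [_ H _ _] := HQ x 0 v y al be.
  + by move=> t; have [_ _ _ H] := HQ x t v 0 al be.
  + move=> t Ht; apply/esym/(Hf x t v _ _).1; first by rewrite Q_yE.
    have [_ _ _ H] := HQ x t v 0 al be; rewrite (affine_eq _ H) /=.
    by field.
Qed.

Variable eps : R.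
Hypothesis Heps : eps = 1 \/ eps = -1.
Hypothesis He : forall x u v y al be, Q x u v y al be = eps * Q x v u y be al.

Lemma gsw x v al be : g Q x v be al = gform (fun t s => Q x t v s al be).
Proof.
rewrite gE /gform (He x v 0 0) (He x v 0 1) (He x v 1 0) (He x v 1 1).
by case: Heps => ->; ring.
Qed.

Lemma gzero al be : (forall x u v, Q x u v 1 al be - Q x u v 0 al be = 0) ->
  forall x u, g Q x u al be = 0 /\ g Q x u be al = 0.
Proof.
move=> H x u; split.
- rewrite gE /gform.
  have E t : Q x u t 1 al be = Q x u t 0 al be by apply/eqP; rewrite -subr_eq0 H.
  rewrite !E; ring.
- rewrite gsw /gform.
  have E t : Q x t u 1 al be = Q x t u 0 al be by apply/eqP; rewrite -subr_eq0 H.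
  rewrite !E; ring.
Qed.

End Helpers.

Theorem proposition2 (R : realType) (Q : Qfun R) (eps sig : R) :
  multiaffine Q ->
  (eps = 1 \/ eps = -1) -> (sig = 1 \/ sig = -1) ->
  (forall x u v y al be, Q x u v y al be = eps * Q x v u y be al) ->
  (forall x u v y al be, Q x u v y al be = sig * Q u x y v al be) ->
  [/\ (* g is independent of v, y *)
      (forall x u v y al be, gexpr Q x u v y al be = g Q x u al be),
      (* g(x,v;be,al) = Q Q_yu - Q_y Q_u *)
      (forall x u v y al be, g Q x v be al = gexpr_u Q x u v y al be),
      (* g(x,u;al,be) = g(u,x;al,be) *)
      (forall x u al be, g Q x u al be = g Q u x al be) &
      forall (a1 a2 a3 : R) (f1 f2 f3 : R -> R -> R -> R),
        (* x23 = f1(x,x2,x3) is the solution of Q(x,x2,x3,x23;a2,a3) = 0 *)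
        (forall x x2 x3, Q_y Q x x2 x3 0 a2 a3 != 0 ->
           forall z, Q x x2 x3 z a2 a3 = 0 <-> z = f1 x x2 x3) ->
        (* x31 = f2(x,x3,x1) is the solution of Q(x,x3,x1,x31;a3,a1) = 0 *)
        (forall x x3 x1, Q_y Q x x3 x1 0 a3 a1 != 0 ->
           forall z, Q x x3 x1 z a3 a1 = 0 <-> z = f2 x x3 x1) ->
        (* x12 = f3(x,x1,x2) is the solution of Q(x,x1,x2,x12;a1,a2) = 0 *)
        (forall x x1 x2, Q_y Q x x1 x2 0 a1 a2 != 0 ->
           forall z, Q x x1 x2 z a1 a2 = 0 <-> z = f3 x x1 x2) ->
        ((forall x x1 x2 x3,
            Q_y Q x x2 x3 0 a2 a3 != 0 -> Q_y Q x x3 x1 0 a3 a1 != 0 ->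
            Q_y Q x x1 x2 0 a1 a2 != 0 ->
            derive1 (fun t => f3 x x1 t) x2 * derive1 (fun t => f2 x x3 t) x1
              * derive1 (fun t => f1 x x2 t) x3
            = - (derive1 (fun t => f3 x t x2) x1 * derive1 (fun t => f2 x t x1) x3
                 * derive1 (fun t => f1 x t x3) x2))
         <->
         (forall x x1 x2 x3,
            g Q x x1 a1 a2 * g Q x x2 a2 a3 * g Q x x3 a3 a1
            = - (g Q x x1 a1 a3 * g Q x x2 a2 a1 * g Q x x3 a3 a2)))].
Proof.
move=> HQ Heps Hsig He Hs.
have gE' := gE _ _ HQ.
have gsw' := gsw _ _ HQ _ Heps He.
split.
- by move=> x u v y al be; rewrite (gexprE _ _ HQ) gE'.
- by move=> x u v y al be; rewrite (gexpr_uE _ _ HQ) gsw'.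
- move=> x u al be; rewrite !gE' /gform (Hs u x 0 0) (Hs u x 0 1) (Hs u x 1 0) (Hs u x 1 1).
  by case: Hsig => ->; ring.
move=> a1 a2 a3 f1 f2 f3 Hf1 Hf2 Hf3.
have D (x x1 x2 x3 : R) :
   Q_y Q x x2 x3 0 a2 a3 != 0 -> Q_y Q x x3 x1 0 a3 a1 != 0 ->
   Q_y Q x x1 x2 0 a1 a2 != 0 ->
   (derive1 (fun t => f3 x x1 t) x2 * derive1 (fun t => f2 x x3 t) x1
              * derive1 (fun t => f1 x x2 t) x3
            = - (derive1 (fun t => f3 x t x2) x1 * derive1 (fun t => f2 x t x1) x3
                 * derive1 (fun t => f1 x t x3) x2)) <->
   (g Q x x1 a1 a2 * g Q x x2 a2 a3 * g Q x x3 a3 a1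
            = - (g Q x x1 a1 a3 * g Q x x2 a2 a1 * g Q x x3 a3 a2)).
  move=> n1 n2 n3.
  have [d3v d3u] := solve_der _ _ HQ _ _ _ Hf3 x x1 x2 n3.
  have [d2v d2u] := solve_der _ _ HQ _ _ _ Hf2 x x3 x1 n2.
  have [d1v d1u] := solve_der _ _ HQ _ _ _ Hf1 x x2 x3 n1.
  rewrite d3v d3u d2v d2u d1v d1u -!gE' -!gsw'.
  exact: alg_id.
split.
- move=> Hfid.
  pose B1 := fun x x1 x2 x3 : R => Q x x2 x3 1 a2 a3 - Q x x2 x3 0 a2 a3.
  pose B2 := fun x x1 x2 x3 : R => Q x x3 x1 1 a3 a1 - Q x x3 x1 0 a3 a1.
  pose B3 := fun x x1 x2 x3 : R => Q x x1 x2 1 a1 a2 - Q x x1 x2 0 a1 a2.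
  pose H := fun x x1 x2 x3 : R => g Q x x1 a1 a2 * g Q x x2 a2 a3 * g Q x x3 a3 a1
            + g Q x x1 a1 a3 * g Q x x2 a2 a1 * g Q x x3 a3 a2.
  suff HH : forall x x1 x2 x3, H x x1 x2 x3 = 0.
    by move=> x x1 x2 x3; apply/eqP; rewrite -addr_eq0; apply/eqP; exact: HH.
  have PB1 : PL R B1.
    by rewrite /B1; repeat first [apply: PLB | apply: PL_Q | apply: PL_cst | apply: PL_p0 | apply: PL_p1 | apply: PL_p2 | apply: PL_p3].
  have PB2 : PL R B2.
    by rewrite /B2; repeat first [apply: PLB | apply: PL_Q | apply: PL_cst | apply: PL_p0 | apply: PL_p1 | apply: PL_p2 | apply: PL_p3].
  have PB3 : PL R B3.
    by rewrite /B3; repeat first [apply: PLB | apply: PL_Q | apply: PL_cst | apply: PL_p0 | apply: PL_p1 | apply: PL_p2 | apply: PL_p3].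
  have PH : PL R H.
    by rewrite /H; repeat first [apply: (PL_g _ _ HQ) | apply: PLD | apply: PLM | apply: PL_p0 | apply: PL_p1 | apply: PL_p2 | apply: PL_p3].
  have onset x x1 x2 x3 : B1 x x1 x2 x3 * B2 x x1 x2 x3 * B3 x x1 x2 x3 != 0 -> H x x1 x2 x3 = 0.
    rewrite !mulf_eq0 !negb_or => /andP [/andP [n1 n2] n3].
    rewrite /B1 /B2 /B3 -!(fun a b c => Q_yE _ _ HQ a b c 0) in n1 n2 n3.
    have := (D x x1 x2 x3 n1 n2 n3).1 (Hfid x x1 x2 x3 n1 n2 n3).
    by rewrite /H => ->; rewrite addNr.
  have [[c0 [c1 [c2 [c3 Hc1]]]]|N1] := pselect (exists c0 c1 c2 c3, B1 c0 c1 c2 c3 != 0); last first.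
    move=> x x1 x2 x3; rewrite /H /=.
    have Z : forall x u v, Q x u v 1 a2 a3 - Q x u v 0 a2 a3 = 0.
      move=> x' u v; apply/eqP/negPn/negP => nz; apply: N1.
      by exists x', 0, u, v.
    have [-> _] := gzero _ _ HQ _ Heps He _ _ Z x x2.
    have [_ ->] := gzero _ _ HQ _ Heps He _ _ Z x x3.
    by rewrite !(mulr0, mul0r) addr0.
  have [[d0 [d1 [d2 [d3 Hd2]]]]|N2] := pselect (exists c0 c1 c2 c3, B2 c0 c1 c2 c3 != 0); last first.
    move=> x x1 x2 x3; rewrite /H /=.
    have Z : forall x u v, Q x u v 1 a3 a1 - Q x u v 0 a3 a1 = 0.
      move=> x' u v; apply/eqP/negPn/negP => nz; apply: N2.
      by exists x', v, 0, u.
    have [-> _] := gzero _ _ HQ _ Heps He _ _ Z x x3.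
    have [_ ->] := gzero _ _ HQ _ Heps He _ _ Z x x1.
    by rewrite !(mulr0, mul0r) addr0.
  have [[e0 [e1 [e2 [e3 He3]]]]|N3] := pselect (exists c0 c1 c2 c3, B3 c0 c1 c2 c3 != 0); last first.
    move=> x x1 x2 x3; rewrite /H /=.
    have Z : forall x u v, Q x u v 1 a1 a2 - Q x u v 0 a1 a2 = 0.
      move=> x' u v; apply/eqP/negPn/negP => nz; apply: N3.
      by exists x', u, v, 0.
    have [-> _] := gzero _ _ HQ _ Heps He _ _ Z x x1.
    have [_ ->] := gzero _ _ HQ _ Heps He _ _ Z x x2.
    by rewrite !(mulr0, mul0r) addr0.
  have [k0 [k1 [k2 [k3 Hk]]]] := PL_nz _ _ _ _ _ _ _ _ _ _ _ PB1 PB2 Hc1 Hd2.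
  have PB12 : PL R (fun a b c d => B1 a b c d * B2 a b c d) by apply: PLM.
  have [m0 [m1 [m2 [m3 Hm]]]] := PL_nz _ _ _ _ _ _ _ _ _ _ _ PB12 PB3 Hk He3.
  have PB : PL R (fun a b c d => B1 a b c d * B2 a b c d * B3 a b c d) by apply: PLM.
  exact: (PL_vanish _ _ _ m0 m1 m2 m3 PH PB Hm onset).
- move=> Hg x x1 x2 x3 n1 n2 n3.
  exact: (D x x1 x2 x3 n1 n2 n3).2 (Hg x x1 x2 x3).
Qed.
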